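(* Let $A$, $B$, $Y$ be sets and let $g:A\to Y$ and $h:B\to Y$ be injective relations. Let $P$ be the set of all paths (minimal non-empty synchronisations) of $(g,h)$, each path being regarded as a pair $\langle\alpha,\beta\rangle$ with $\alpha\subseteq A$, $\beta\subseteq B$. Define relations $p:P\to A$ and $q:P\to B$ by: $\langle\alpha,\beta\rangle\,p\,a$ iff $a\in\alpha$, and $\langle\alpha,\beta\rangle\,q\,b$ iff $b\in\beta$ (so $p(\langle\alpha,\beta\rangle)=\alpha$ and $q(\langle\alpha,\beta\rangle)=\beta$). Then $p$ and $q$ are injective relations, and the square $gp=hq$ is a pullback of $g$ and $h$ in the category $\mathbf{iRel}$.
   Context: A binary relation $R:A\to Z$ (i.e. $R\subseteq A\times Z$; write $aRz$ for $\langle a,z\rangle\in R$) is injective if $aRz$ and $a'Rz$ imply $a=a'$. $\mathbf{iRel}$ is the category of sets and injective relations, with composition of relations ($R$ then $S$ written $SR$). For a relation $R:A\to Z$ and $\alpha\subseteq A$, $R(\alpha)=\{z\in Z: aRz\text{ for some }a\in\alpha\}$, and $R(a)=R(\{a\})$. Given injective relations $g:A\to Y$ and $h:B\to Y$, a synchronisation is a pair $\langle\alpha,\beta\rangle$ with $\alpha\subseteq A$, $\beta\subseteq B$ and $g(\alpha)=h(\beta)$; such pairs are identified with subsets $\alpha+\beta$ of the disjoint union $A+B$, and inclusion, intersection, union and emptiness of pairs are taken via this identification. A path is a non-empty synchronisation that is minimal with respect to inclusion among non-empty synchronisations. *)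

(* Defs.v *)
Set Implicit Arguments.

Definition rel (A Z : Type) := A -> Z -> Prop.

Definition rel_eq {A Z : Type} (R S : rel A Z) : Prop :=
  forall a z, R a z <-> S a z.

Definition injective_rel {A Z : Type} (R : rel A Z) : Prop :=
  forall a a' z, R a z -> R a' z -> a = a'.

(* composition "R then S", written S R *)
Definition rcomp {A Y Z : Type} (S : rel Y Z) (R : rel A Y) : rel A Z :=
  fun a z => exists y, R a y /\ S y z.

Definition rimage {A Z : Type} (R : rel A Z) (alpha : A -> Prop) : Z -> Prop :=
  fun z => exists a, alpha a /\ R a z.

Section Sync.
Variables (A B Y : Type) (g : rel A Y) (h : rel B Y).

Definition is_sync (alpha : A -> Prop) (beta : B -> Prop) : Prop :=
  forall y, rimage g alpha y <-> rimage h beta y.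

(* inclusion of pairs, via alpha + beta as a subset of A + B *)
Definition pair_sub (alpha : A -> Prop) (beta : B -> Prop)
  (alpha' : A -> Prop) (beta' : B -> Prop) : Prop :=
  (forall a, alpha a -> alpha' a) /\ (forall b, beta b -> beta' b).

Definition pair_nonempty (alpha : A -> Prop) (beta : B -> Prop) : Prop :=
  (exists a, alpha a) \/ (exists b, beta b).

Definition is_path (alpha : A -> Prop) (beta : B -> Prop) : Prop :=
  is_sync alpha beta /\ pair_nonempty alpha beta /\
  forall alpha' beta', is_sync alpha' beta' -> pair_nonempty alpha' beta' ->
    pair_sub alpha' beta' alpha beta -> pair_sub alpha beta alpha' beta'.

End Sync.

Record path (A B Y : Type) (g : rel A Y) (h : rel B Y) : Type := Path {
  path_a : A -> Prop;
  path_b : B -> Prop;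
  path_ok : is_path g h path_a path_b }.

Definition path_p {A B Y : Type} (g : rel A Y) (h : rel B Y) :
  rel (path g h) A := fun s a => path_a s a.

Definition path_q {A B Y : Type} (g : rel A Y) (h : rel B Y) :
  rel (path g h) B := fun s b => path_b s b.

Definition iRel_pullback {A B Y P : Type} (g : rel A Y) (h : rel B Y)
  (p : rel P A) (q : rel P B) : Prop :=
  rel_eq (rcomp g p) (rcomp h q) /\
  forall (X : Type) (u : rel X A) (v : rel X B),
    injective_rel u -> injective_rel v -> rel_eq (rcomp g u) (rcomp h v) ->
    exists w : rel X P,
      injective_rel w /\ rel_eq (rcomp p w) u /\ rel_eq (rcomp q w) v /\
      forall w' : rel X P, injective_rel w' ->
        rel_eq (rcomp p w') u -> rel_eq (rcomp q w') v -> rel_eq w' w.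
Arguments path_p {A B Y} g h _ _.
Arguments path_q {A B Y} g h _ _.

(* Main.v *)
Require Import Defs.
From Stdlib Require Import Classical FunctionalExtensionality PropExtensionality ProofIrrelevance.

Section S.
Variables (A B Y : Type) (g : rel A Y) (h : rel B Y).
Hypothesis gi : injective_rel g.
Hypothesis hi : injective_rel h.

Lemma inter_sync al be al' be' : is_sync g h al be -> is_sync g h al' be' ->
  is_sync g h (fun a => al a /\ al' a) (fun b => be b /\ be' b).
Proof.
  intros H1 H2 y; split.
  - intros [a [[Ha Ha'] Hg]].
    destruct (proj1 (H1 y) (ex_intro _ a (conj Ha Hg))) as [b [Hb Hh]].
    destruct (proj1 (H2 y) (ex_intro _ a (conj Ha' Hg))) as [b' [Hb' Hh']].
    rewrite (hi _ _ _ Hh Hh') in Hb. exists b'; tauto.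
  - intros [b [[Hb Hb'] Hh]].
    destruct (proj2 (H1 y) (ex_intro _ b (conj Hb Hh))) as [a [Ha Hg]].
    destruct (proj2 (H2 y) (ex_intro _ b (conj Hb' Hh))) as [a' [Ha' Hg']].
    rewrite (gi _ _ _ Hg Hg') in Ha. exists a'; tauto.
Qed.

Lemma diff_sync al be al' be' : is_sync g h al be -> is_sync g h al' be' ->
  is_sync g h (fun a => al a /\ ~ al' a) (fun b => be b /\ ~ be' b).
Proof.
  intros H1 H2 y; split.
  - intros [a [[Ha Ha'] Hg]].
    destruct (proj1 (H1 y) (ex_intro _ a (conj Ha Hg))) as [b [Hb Hh]].
    exists b; repeat split; auto. intro Hb'.
    destruct (proj2 (H2 y) (ex_intro _ b (conj Hb' Hh))) as [a' [Ha'' Hg']].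
    rewrite (gi _ _ _ Hg Hg') in Ha'. tauto.
  - intros [b [[Hb Hb'] Hh]].
    destruct (proj2 (H1 y) (ex_intro _ b (conj Hb Hh))) as [a [Ha Hg]].
    exists a; repeat split; auto. intro Ha'.
    destruct (proj1 (H2 y) (ex_intro _ a (conj Ha' Hg))) as [b' [Hb'' Hh']].
    rewrite (hi _ _ _ Hh Hh') in Hb'. tauto.
Qed.

Definition inp (al : A -> Prop) (be : B -> Prop) (e : A + B) : Prop :=
  match e with inl a => al a | inr b => be b end.

Definition Ca (e : A + B) : A -> Prop := fun a =>
  forall al be, is_sync g h al be -> inp al be e -> al a.
Definition Cb (e : A + B) : B -> Prop := fun b =>
  forall al be, is_sync g h al be -> inp al be e -> be b.

Lemma C_in e : inp (Ca e) (Cb e) e.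
Proof. destruct e; simpl; unfold Ca, Cb; intros al be _ H; exact H. Qed.

Lemma big_sync e al0 be0 : is_sync g h al0 be0 -> inp al0 be0 e ->
  is_sync g h (Ca e) (Cb e).
Proof.
  intros H0 He y; split.
  - intros [a [Ha Hg]].
    destruct (proj1 (H0 y) (ex_intro _ a (conj (Ha _ _ H0 He) Hg))) as [b0 [Hb0 Hh0]].
    exists b0; split; auto. intros al be Hs Hi.
    destruct (proj1 (Hs y) (ex_intro _ a (conj (Ha _ _ Hs Hi) Hg))) as [b [Hb Hh]].
    rewrite (hi _ _ _ Hh0 Hh). exact Hb.
  - intros [b [Hb Hh]].
    destruct (proj2 (H0 y) (ex_intro _ b (conj (Hb _ _ H0 He) Hh))) as [a0 [Ha0 Hg0]].
    exists a0; split; auto. intros al be Hs Hi.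
    destruct (proj2 (Hs y) (ex_intro _ b (conj (Hb _ _ Hs Hi) Hh))) as [a [Ha Hg]].
    rewrite (gi _ _ _ Hg0 Hg). exact Ha.
Qed.

Lemma C_path e al0 be0 : is_sync g h al0 be0 -> inp al0 be0 e ->
  is_path g h (Ca e) (Cb e).
Proof.
  intros H0 He. pose proof (big_sync _ _ _ H0 He) as Hs.
  split; [exact Hs|split].
  - pose proof (C_in e) as Hc. destruct e as [a|b]; [left; exists a|right; exists b]; exact Hc.
  - intros al be Hs' Hne [Sa Sb].
    destruct (classic (inp al be e)) as [Hi|Hni].
    + split; intros x Hx; exact (Hx _ _ Hs' Hi).
    + exfalso.
      pose proof (diff_sync _ _ _ _ Hs Hs') as Hd.
      assert (Hde : inp (fun a => Ca e a /\ ~ al a) (fun b => Cb e b /\ ~ be b) e).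
      { pose proof (C_in e). destruct e; simpl in *; tauto. }
      destruct Hne as [[a Ha]|[b Hb]].
      * pose proof (Sa a Ha _ _ Hd Hde). simpl in *; tauto.
      * pose proof (Sb b Hb _ _ Hd Hde). simpl in *; tauto.
Qed.

Lemma path_eq (s s' : path g h) :
  (exists a, path_a s a /\ path_a s' a) \/ (exists b, path_b s b /\ path_b s' b) ->
  s = s'.
Proof.
  intros Hc. destruct s as [al be [S1 [N1 M1]]], s' as [al' be' [S2 [N2 M2]]]; simpl in *.
  pose proof (inter_sync _ _ _ _ S1 S2) as Si.
  assert (Ni : pair_nonempty (fun a => al a /\ al' a) (fun b => be b /\ be' b)).
  { destruct Hc as [[a Ha]|[b Hb]]; [left; exists a|right; exists b]; auto. }
  destruct (M1 _ _ Si Ni) as [P1 Q1]; [split; intros; tauto|].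
  destruct (M2 _ _ Si Ni) as [P2 Q2]; [split; intros; tauto|].
  assert (al = al') by (extensionality a; apply propositional_extensionality;
    split; intro Hz; [apply P1 | apply P2]; auto).
  assert (be = be') by (extensionality b; apply propositional_extensionality;
    split; intro Hz; [apply Q1 | apply Q2]; auto).
  subst. f_equal. apply proof_irrelevance.
Qed.

End S.
Arguments inp {A B} al be e.
Arguments Ca {A B Y} g h e _.
Arguments Cb {A B Y} g h e _.
Arguments C_path {A B Y g h} gi hi e al0 be0 _ _.
Arguments C_in {A B Y} g h e.
Arguments path_eq {A B Y g h} gi hi s s' _.

Theorem theorem1 (A B Y : Type) (g : rel A Y) (h : rel B Y) :
  injective_rel g -> injective_rel h ->
  injective_rel (path_p g h) /\ injective_rel (path_q g h) /\
  iRel_pullback g h (path_p g h) (path_q g h).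
Proof.
  intros gi hi.
  assert (Hp : injective_rel (path_p g h)).
  { intros s s' a H1 H2. apply path_eq; auto. left; exists a; auto. }
  assert (Hq : injective_rel (path_q g h)).
  { intros s s' b H1 H2. apply path_eq; auto. right; exists b; auto. }
  split; [exact Hp|split; [exact Hq|split]].
  - intros s y; unfold rcomp, path_p, path_q.
    destruct (path_ok s) as [Ss _]. apply Ss.
  - intros X u v ui vi Huv.
    assert (Sx : forall x, is_sync g h (u x) (v x)).
    { intros x y. apply Huv. }
    exists (fun x s => pair_sub (path_a s) (path_b s) (u x) (v x)).
    assert (Hw : forall x (e : A + B), inp (u x) (v x) e -> exists s : path g h,
               inp (path_a s) (path_b s) e /\ pair_sub (path_a s) (path_b s) (u x) (v x)).
    { intros x e He.
      exists (Path (C_path gi hi _ _ _ (Sx x) He)); simpl. split.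
      - apply C_in.
      - split; intros z Hz; exact (Hz _ _ (Sx x) He). }
    split; [|split; [|split]].
    + intros x x' s [Ua Ub] [Ua' Ub'].
      destruct (path_ok s) as [_ [[[a Ha]|[b Hb]] _]].
      * exact (ui _ _ _ (Ua _ Ha) (Ua' _ Ha)).
      * exact (vi _ _ _ (Ub _ Hb) (Ub' _ Hb)).
    + intros x a; split.
      * intros [s [[Ua _] Ha]]. exact (Ua _ Ha).
      * intros H. destruct (Hw x (inl a) H) as [s [Hs Hsub]]. exists s; split; auto.
    + intros x b; split.
      * intros [s [[_ Ub] Hb]]. exact (Ub _ Hb).
      * intros H. destruct (Hw x (inr b) H) as [s [Hs Hsub]]. exists s; split; auto.
    + intros w' wi Hpw Hqw x s.
      assert (F : forall s, w' x s -> pair_sub (path_a s) (path_b s) (u x) (v x)).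
      { intros s0 H0; split.
        - intros a Ha. apply Hpw. exists s0; split; auto.
        - intros b Hb. apply Hqw. exists s0; split; auto. }
      split; [apply F|].
      intros [Ua Ub].
      destruct (path_ok s) as [_ [[[a Ha]|[b Hb]] _]].
      * destruct (proj2 (Hpw x a) (Ua _ Ha)) as [s' [Hw' Ha']].
        replace s with s'; auto. apply path_eq; auto. left; exists a; auto.
      * destruct (proj2 (Hqw x b) (Ub _ Hb)) as [s' [Hw' Hb']].
        replace s with s'; auto. apply path_eq; auto. right; exists b; auto.
Qed.
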